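(* Let $q$ be an odd prime power of characteristic $p$, and let $\{x_k\}_{k\in[n]}$ be a family in $\mathbb{F}_{q^2}^d$. Consider the statements: (a) $\{x_k\}_{k\in[n]}$ is a projective $2$-design (i.e. an $(a,c_1,c_2)$-projective $2$-design for some $a,c_1,c_2\in\mathbb{F}_q$); (b) $n=d^2$; (c) there exist $a,b,c_1\in\mathbb{F}_q$ such that (i) $a^2\neq b$; (ii) if $a\neq0$ then $a^2-b=\frac{bc_1}{a}$; (iii) if $a=0$ then $d\equiv -1 \pmod p$; and (iv) $\{x_k\}_{k\in[n]}$ is an $(a,b,c_1)$-equiangular tight frame for $\mathbb{F}_{q^2}^d$. Any two of (a), (b), (c) together imply the third. Moreover, when (a), (b), (c) hold, $\{x_k\}_{k\in[n]}$ is an $(a,c_1,c_2)$-projective $2$-design with $c_2=2(a^2-b)$ (with $a,b,c_1$ as in (c)).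
   Context: For $a\in\mathbb{F}_{q^2}$ write $\overline{a}=a^q$; $A^*$ is conjugate transpose; $\langle x,y\rangle=x^*y$ on $\mathbb{F}_{q^2}^d$ and analogously on $(\mathbb{F}_{q^2}^d)^{\otimes 2}$. A subspace $V$ is nondegenerate if $V\cap V^\perp=\{0\}$. For nondegenerate $V$, a family $\{y_k\}_{k\in[n]}$ in $V$ is a $c$-tight frame for $V$ ($c\in\mathbb{F}_q$) if $\operatorname{span}\{y_k\}=V$ and $\sum_k\langle y_k,y\rangle y_k=cy$ for all $y\in V$. It is an $(a,b,c)$-equiangular tight frame ($a,b,c\in\mathbb{F}_q$) if moreover $\langle y_k,y_k\rangle=a$ for all $k$ and $\langle y_k,y_\ell\rangle\langle y_\ell,y_k\rangle=b$ for all $k\neq\ell$. $(\mathbb{F}_{q^2}^d)^{\otimes2}_{\mathrm{sym}}=\{\sum_{i,j}c_{ij}e_i\otimes e_j:c_{ij}=c_{ji}\}$ is nondegenerate with orthogonal projection $\Pi_d^{(2)}=\frac12\sum_{i,j}(e_ie_i^*\otimes e_je_j^*+e_ie_j^*\otimes e_je_i^* )$. A family $\{x_k\}_{k\in[n]}$ in $\mathbb{F}_{q^2}^d$ is an $(a,c_1,c_2)$-projective $2$-design if (i) $\langle x_k,x_k\rangle=a$ for all $k$, (ii) $\{x_k\}$ is a $c_1$-tight frame for $\mathbb{F}_{q^2}^d$, and (iii) $\{x_k\otimes x_k\}$ is a $c_2$-tight frame for $(\mathbb{F}_{q^2}^d)^{\otimes 2}_{\mathrm{sym}}$. Integers such as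 $d$ are viewed in $\mathbb{F}_q$ via reduction mod $p$. *)

(* Defs.v *)
From HB Require Import structures.
From mathcomp Require Import all_boot all_order all_algebra all_field.

Set Implicit Arguments. Unset Strict Implicit. Unset Printing Implicit Defensive.
Import GRing.Theory.
Local Open Scope ring_scope.

(* L plays the role of F_{q^2}; conjugation is a |-> a^q. *)
Definition qconj (L : finFieldType) (q : nat) (a : L) : L := a ^+ q.

Definition inFq (L : finFieldType) (q : nat) (a : L) : Prop := qconj q a = a.

Definition ipv (L : finFieldType) (q d : nat) (x y : 'cV[L]_d) : L :=
  \sum_(i < d) qconj q (x i 0) * y i 0.

(* (F_{q^2}^d)^{(x)2} is identified with d x d matrices via
   e_i (x) e_j |-> delta_mx i j, so x (x) y |-> x *m y^T and the
   inner product becomes sum_{i,j} conj(A i j) B i j. *)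
Definition ipm (L : finFieldType) (q d : nat) (A B : 'M[L]_d) : L :=
  \sum_(i < d) \sum_(j < d) qconj q (A i j) * B i j.

Definition tens2 (L : finFieldType) (d : nat) (x : 'cV[L]_d) : 'M[L]_d :=
  x *m x^T.

Definition symsub (L : finFieldType) (d : nat) : pred 'M[L]_d :=
  fun A => A^T == A.

Definition tight_frame (L : finFieldType) (q : nat) (V : lmodType L)
    (ip : V -> V -> L) (S : pred V) (n : nat) (y : 'I_n -> V) (c : L) : Prop :=
  [/\ inFq q c,
      (forall k, S (y k)),
      (forall v, S v <-> exists coef : 'I_n -> L, v = \sum_(k < n) coef k *: y k)
    & (forall v, S v -> \sum_(k < n) ip (y k) v *: y k = c *: v)].

Definition etf (L : finFieldType) (q d n : nat) (a b c : L)
    (y : 'I_n -> 'cV[L]_d) : Prop :=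
  [/\ inFq q a, inFq q b,
      tight_frame q (@ipv L q d) predT y c,
      (forall k, ipv q (y k) (y k) = a)
    & (forall k l, k != l -> ipv q (y k) (y l) * ipv q (y l) (y k) = b)].

Definition proj2design (L : finFieldType) (q d n : nat) (a c1 c2 : L)
    (x : 'I_n -> 'cV[L]_d) : Prop :=
  [/\ inFq q a,
      (forall k, ipv q (x k) (x k) = a),
      tight_frame q (@ipv L q d) predT x c1
    & tight_frame q (@ipm L q d) (@symsub L d) (fun k => tens2 (x k)) c2].

Definition condC (L : finFieldType) (q d n : nat) (a b c1 : L)
    (x : 'I_n -> 'cV[L]_d) : Prop :=
  [/\ inFq q a /\ inFq q b /\ inFq q c1,
      a ^+ 2 != b,
      (a != 0 -> a ^+ 2 - b = b * c1 / a),
      (a = 0 -> (d.+1)%:R = 0 :> L)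
    & etf q a b c1 x].

(* Main.v *)
From HB Require Import structures.
From mathcomp Require Import all_boot all_order all_algebra all_field.
From mathcomp Require Import ring.
From Stdlib Require Import ClassicalEpsilon.
Require Import Defs.
Set Implicit Arguments. Unset Strict Implicit. Unset Printing Implicit Defensive.
Import GRing.Theory.
Local Open Scope ring_scope.
Section Base.
Variables (L : finFieldType) (q : nat).
Hypotheses (hcard : #|L| = (q ^ 2)%N) (hodd : odd q).

Lemma char_info : exists p, [/\ prime p, p \in [char L], p != 2%N & [char L].-nat q].
Proof.
have [p pp chp] := finPcharP L.
have hc : #|L| = (p ^ logn p #|L|)%N by exact: (card_pprimeChar chp).
have : (q %| p ^ logn p #|L|)%N by rewrite -hc hcard dvdn_exp.
case/(dvdn_pfactor _ _ pp) => j _ hq.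
exists p; split => //.
  apply/eqP => p2; move: hodd; rewrite hq p2 oddX orbF => /eqP j0.
  have := finNzRing_gt1 L; rewrite hcard hq p2 j0 /=; by [].
by rewrite (eq_pnat _ (pcharf_eq chp)) hq pnatX pnat_id.
Qed.

Definition cj (a : L) := qconj q a.

Lemma cjD a b : cj (a + b) = cj a + cj b.
Proof. have [p [_ _ _ hn]] := char_info; exact: exprDn_pchar. Qed.
Lemma cjM a b : cj (a * b) = cj a * cj b.
Proof. exact: exprMn. Qed.
Lemma cj0 : cj 0 = 0.
Proof. rewrite /cj /qconj expr0n; case: q hodd => //. Qed.
Lemma cj1 : cj 1 = 1.
Proof. exact: expr1n. Qed.
Lemma cjN a : cj (- a) = - cj a.
Proof. by rewrite /cj /qconj exprNn -signr_odd hodd expr1 mulN1r. Qed.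
Lemma cjB a b : cj (a - b) = cj a - cj b.
Proof. by rewrite cjD cjN. Qed.
Lemma cjK a : cj (cj a) = a.
Proof. by rewrite /cj /qconj -exprM mulnn -hcard expf_card. Qed.
Lemma cjV a : cj (a^-1) = (cj a)^-1.
Proof. exact: exprVn. Qed.
Lemma cj_nat k : cj k%:R = k%:R.
Proof. elim: k => [|k IH]; first exact: cj0. by rewrite -addn1 natrD cjD IH cj1. Qed.
Lemma cj_sum (I : Type) (r : seq I) (P : pred I) (F : I -> L) :
  cj (\sum_(i <- r | P i) F i) = \sum_(i <- r | P i) cj (F i).
Proof. exact: (big_morph cj cjD cj0). Qed.
Lemma cj_eq0 a : (cj a == 0) = (a == 0).
Proof. by rewrite /cj /qconj expf_eq0; case: q hodd. Qed.
Lemma two_neq0 : (2%:R : L) != 0.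
Proof.
have [p [pp chp p2 _]] := char_info; apply/negP => /eqP h.
have : (2%N \in [char L]) by rewrite inE /= h eqxx.
by rewrite (pcharf_eq chp) inE eq_sym (negbTE p2).
Qed.
Lemma inFqM (a b : L) : inFq q a -> inFq q b -> inFq q (a * b).
Proof. rewrite /inFq -!/(cj _) => ha hb; by rewrite cjM ha hb. Qed.
Lemma inFqB (a b : L) : inFq q a -> inFq q b -> inFq q (a - b).
Proof. rewrite /inFq -!/(cj _) => ha hb; by rewrite cjB ha hb. Qed.
Lemma inFqN (a : L) : inFq q a -> inFq q (- a).
Proof. rewrite /inFq -!/(cj _) => ha; by rewrite cjN ha. Qed.
Lemma inFqV (a : L) : inFq q a -> inFq q (a^-1).
Proof. rewrite /inFq -!/(cj _) => ha; by rewrite cjV ha. Qed.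
Lemma inFq_nat k : inFq q (k%:R : L).
Proof. exact: cj_nat. Qed.
End Base.
Section Tools.
Variable F : fieldType.

Lemma sum_enum (K : finType) (f : K -> F) :
  \sum_(k < #|K|) f (enum_val k) = \sum_k f k.
Proof. by rewrite (reindex enum_val (onW_bij _ (enum_val_bij K))). Qed.

Lemma dual_card (I K : finType) (u w : I -> K -> F) :
  (forall i j, \sum_k u i k * w j k = (i == j)%:R) -> (#|I| <= #|K|)%N.
Proof.
move=> H.
pose U := \matrix_(i < #|I|, k < #|K|) u (enum_val i) (enum_val k).
pose W := \matrix_(k < #|K|, j < #|I|) w (enum_val j) (enum_val k).
have UW : U *m W = 1%:M.
  apply/matrixP=> i j; rewrite !mxE.
  under eq_bigr do rewrite !mxE.
  by rewrite (sum_enum (fun k => u (enum_val i) k * w (enum_val j) k)) H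
     (inj_eq enum_val_inj).
have := mxrankM_maxl U W; rewrite UW mxrank1 => h.
exact: leq_trans h (rank_leq_col U).
Qed.

Lemma span_indep (K : finType) n (G : 'I_n -> K -> F)
  (co : (K -> F) -> 'I_n -> F) : n = #|K| ->
  (forall v k, v k = \sum_m co v m * G m k) ->
  forall al : 'I_n -> F, (forall k, \sum_m al m * G m k = 0) -> forall m, al m = 0.
Proof.
move=> en; subst n => hsp al hal m.
pose Gm := \matrix_(m < #|K|, k < #|K|) G m (enum_val k).
pose B := \matrix_(k0 < #|K|, m < #|K|) co (fun k => (enum_val k0 == k)%:R) m.
have BG : B *m Gm = 1%:M.
  apply/matrixP=> i j; rewrite !mxE.
  under eq_bigr do rewrite !mxE.
  by rewrite -(hsp (fun k => (enum_val i == k)%:R)) (inj_eq enum_val_inj).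
have GB := mulmx1C BG.
pose a := \row_m al m.
have aG : a *m Gm = 0.
  apply/matrixP=> i j; rewrite !mxE.
  under eq_bigr do rewrite !mxE.
  exact: hal.
have : a = 0 by rewrite -[a]mulmx1 -GB mulmxA aG mul0mx.
by move/matrixP/(_ 0 m); rewrite !mxE.
Qed.

Lemma dual_span (K : finType) n (G H : 'I_n -> K -> F) : n = #|K| ->
  (forall i j, \sum_k G i k * H j k = (i == j)%:R) ->
  forall (v : K -> F) k, v k = \sum_m (\sum_k' v k' * H m k') * G m k.
Proof.
move=> en; subst n => hd v k.
pose Gm := \matrix_(m < #|K|, k < #|K|) G m (enum_val k).
pose Hm := \matrix_(k < #|K|, m < #|K|) H m (enum_val k).
have GH : Gm *m Hm = 1%:M.
  apply/matrixP=> i j; rewrite !mxE.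
  under eq_bigr do rewrite !mxE.
  by rewrite (sum_enum (fun k => G i k * H j k)) hd.
have HG := mulmx1C GH.
pose a := \row_(k < #|K|) v (enum_val k).
have : a = a *m Hm *m Gm by rewrite -mulmxA HG mulmx1.
move/matrixP/(_ 0 (enum_rank k)); rewrite !mxE enum_rankK => ->.
apply: eq_bigr => m _; rewrite !mxE enum_rankK; congr (_ * _).
rewrite -(sum_enum (fun k' => v k' * H m k')).
by apply: eq_bigr => i _; rewrite !mxE.
Qed.
End Tools.

Lemma sum_delta (F : fieldType) (I : finType) (a : I) (G : I -> F) :
  \sum_s (s == a)%:R * G s = G a.
Proof.
rewrite (bigD1 a) //= eqxx mul1r big1 ?addr0 // => s /negbTE->; by rewrite mul0r.
Qed.

Lemma sum_delta_r (F : fieldType) (I : finType) (a : I) (G : I -> F) :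
  \sum_s G s * (s == a)%:R = G a.
Proof. by rewrite -(sum_delta a G); apply: eq_bigr => s _; rewrite mulrC. Qed.

Lemma sum_entry (F : fieldType) (I : finType) d (al : I -> F) (Q : I -> 'M[F]_d) i j :
  (\sum_m al m *: Q m) i j = \sum_m al m * Q m i j.
Proof. rewrite summxE; apply: eq_bigr => m _; by rewrite mxE. Qed.

Lemma sum2_diag (F : fieldType) (I : finType) (G : I -> I -> F) :
  \sum_s \sum_t G s t * (s == t)%:R = \sum_s G s s.
Proof. by apply: eq_bigr => s _; rewrite -(sum_delta_r s (G s)); apply: eq_bigr => t _; rewrite eq_sym. Qed.

Lemma sum2_dd (F : fieldType) (I : finType) (G : I -> I -> F) a b :
  \sum_s \sum_t G s t * ((a == t)%:R * (s == b)%:R) = G b a.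
Proof.
rewrite -(sum_delta_r b (fun s => G s a)); apply: eq_bigr => s _.
rewrite -(sum_delta_r a (fun t => G s t * (s == b)%:R)); apply: eq_bigr => t _.
by rewrite eq_sym; ring.
Qed.

Lemma sum2_pt (F : fieldType) (I : finType) (G : I -> I -> F) a b :
  \sum_s \sum_t G s t * ((s == a)%:R * (t == b)%:R) = G a b.
Proof.
rewrite -(sum_delta_r a (fun s => G s b)); apply: eq_bigr => s _.
rewrite -(sum_delta_r b (fun t => G s t * (s == a)%:R)); apply: eq_bigr => t _.
ring.
Qed.

Lemma card_le_half d : (0 < d)%N ->
  (d * d < #|[pred p : 'I_d * 'I_d | (p.1 <= p.2)%N]| + #|[pred p : 'I_d * 'I_d | (p.1 <= p.2)%N]|)%N.
Proof.
move=> dpos.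
set A := [pred p : 'I_d * 'I_d | (p.1 <= p.2)%N].
set A' := [pred p : 'I_d * 'I_d | (p.2 <= p.1)%N].
have eA : #|A'| = #|A|.
  rewrite -!sum1_card (reindex_inj (h := fun p : 'I_d * 'I_d => (p.2, p.1))) //.
  by move=> [? ?] [? ?] [-> ->].
rewrite -{2}eA -cardUI.
have -> : #|[predU A & A']| = (d * d)%N.
  transitivity #|{: 'I_d * 'I_d}|; last by rewrite card_prod card_ord.
  apply: eq_card => p; rewrite !inE /=; exact: leq_total.
rewrite -addn1 leq_add2l.
by apply/card_gt0P; exists (Ordinal dpos, Ordinal dpos); rewrite !inE /= leqnn.
Qed.

Section Main.
Variables (L : finFieldType) (q : nat).
Hypotheses (hcard : #|L| = (q ^ 2)%N) (hodd : odd q).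
Variables (d n : nat) (x : 'I_n -> 'cV[L]_d).

Local Notation cj := (cj q).
Let cjD := cjD hcard hodd.
Let cjB := cjB hcard hodd.
Let cjN := @cjN L q hodd.
Let cj0 := @cj0 L q hodd.
Let cjK := cjK hcard.
Let cj_nat := cj_nat hcard hodd.
Let cj_sum := cj_sum hcard hodd.
Let two_neq0 := two_neq0 hcard hodd.
Let inFqM := @inFqM L q.
Let inFqB := @inFqB L q hcard hodd.
Let inFqN := @inFqN L q hodd.
Let inFqV := @inFqV L q.
Let inFq_nat := @inFq_nat L q hcard hodd.
Let cj_eq0 := @cj_eq0 L q hodd.

Definition P m : 'M[L]_d := \matrix_(i, j) (x m i 0 * cj (x m j 0)).
Definition Phi (M : 'M[L]_d) := \sum_m \tr (P m *m M) *: P m.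

Lemma trE (A B : 'M[L]_d) : \tr (A *m B) = \sum_i \sum_j A i j * B j i.
Proof. by apply: eq_bigr => i _; rewrite mxE. Qed.

Lemma trP m : \tr (P m) = ipv q (x m) (x m).
Proof. by apply: eq_bigr => i _; rewrite mxE mulrC. Qed.

Lemma trPP k l : \tr (P k *m P l) = ipv q (x k) (x l) * ipv q (x l) (x k).
Proof.
rewrite trE /ipv mulrC big_distrl /=; apply: eq_bigr => i _.
rewrite big_distrr /=; apply: eq_bigr => j _; rewrite !mxE /cj; ring.
Qed.

Lemma sumP_frame c : (forall v, \sum_k ipv q (x k) v *: x k = c *: v) ->
  \sum_k P k = c *: 1%:M.
Proof.
move=> H; apply/matrixP => i j.
have := congr1 (fun M : 'cV_d => M i 0) (H (delta_mx j 0)).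
move=> h; rewrite (summxE _ _ (fun k => ipv q (x k) (delta_mx j 0) *: x k)) !mxE eqxx andbT /= in h.
rewrite (summxE _ _ (fun k => P k)) !mxE -h; apply: eq_bigr => k _; rewrite !mxE mulrC; congr (_ * _).
rewrite /ipv (bigD1 j) //= big1 ?addr0; first by rewrite mxE !eqxx mulr1.
by move=> t /negbTE ht; rewrite mxE ht mulr0.
Qed.

Lemma Phi_sum (Q : 'I_n -> 'M[L]_d) (al : 'I_n -> L) :
  Phi (\sum_m al m *: Q m) = \sum_m al m *: Phi (Q m).
Proof.
rewrite /Phi.
under eq_bigr do rewrite mulmx_sumr raddf_sum scaler_suml.
rewrite exchange_big /=; apply: eq_bigr => j _; rewrite scaler_sumr.
by apply: eq_bigr => m _; rewrite -scalemxAr mxtraceZ scalerA.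
Qed.

Definition Psi (h : L) (M : 'M[L]_d) := h *: (M + \tr M *: 1%:M).

Lemma Psi_sum h (Q : 'I_n -> 'M[L]_d) (al : 'I_n -> L) :
  Psi h (\sum_m al m *: Q m) = \sum_m al m *: Psi h (Q m).
Proof.
rewrite /Psi raddf_sum /= scaler_suml -big_split /= scaler_sumr.
by apply: eq_bigr => m _; rewrite mxtraceZ -scalerA -scalerDr !scalerA mulrC.
Qed.

Lemma agree (Q : 'I_n -> 'M[L]_d) (co : 'M[L]_d -> 'I_n -> L) h :
  (forall M, M = \sum_m co M m *: Q m) ->
  (forall m, Phi (Q m) = Psi h (Q m)) -> forall M, Phi M = Psi h M.
Proof.
move=> sp ag M; rewrite (sp M) Phi_sum Psi_sum.
by apply: eq_bigr => m _; rewrite ag.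
Qed.

Lemma cardK : #|{: 'I_d * 'I_d}| = (d * d)%N.
Proof. by rewrite card_prod card_ord. Qed.

Lemma trE2 (A B : 'M[L]_d) : \tr (A *m B) = \sum_(k : 'I_d * 'I_d) A k.1 k.2 * B k.2 k.1.
Proof. by rewrite trE (pair_bigA _ (fun i j => A i j * B j i)). Qed.

Lemma dual_card_mx (Q W : 'I_n -> 'M[L]_d) :
  (forall i j, \tr (Q i *m W j) = (i == j)%:R) -> (n <= d * d)%N.
Proof.
move=> H; rewrite -cardK -[n]card_ord.
apply: (@dual_card _ _ _ (fun i k => Q i k.1 k.2) (fun j k => W j k.2 k.1)).
by move=> i j; rewrite -trE2 H.
Qed.

Lemma span_card (Q : 'I_n -> 'M[L]_d) (co : 'M[L]_d -> 'I_n -> L) :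
  (forall M, M = \sum_m co M m *: Q m) -> (d * d <= n)%N.
Proof.
move=> H; rewrite -cardK -[n]card_ord.
apply: (@dual_card _ _ _ (fun (k : 'I_d * 'I_d) m => co (delta_mx k.1 k.2) m)
   (fun k m => Q m k.1 k.2)).
move=> [i1 i2] [j1 j2] /=.
have := congr1 (fun M : 'M_d => M j1 j2) (H (delta_mx i1 i2)).
rewrite sum_entry mxE.
by rewrite xpair_eqE [i1 == j1]eq_sym [i2 == j2]eq_sym => ->.
Qed.

Lemma dual_span_mx (Q W : 'I_n -> 'M[L]_d) : n = (d * d)%N ->
  (forall i j, \tr (Q i *m W j) = (i == j)%:R) ->
  forall M, M = \sum_m \tr (M *m W m) *: Q m.
Proof.
move=> en H M; rewrite -cardK in en.
have hs := @dual_span _ _ _ (fun i k => Q i k.1 k.2) (fun j k => W j k.2 k.1) en.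
have {}hs := hs (fun i j => etrans (esym (trE2 _ _)) (H i j)).
apply/matrixP => i j.
rewrite (hs (fun k => M k.1 k.2) (i, j)) /=.
rewrite sum_entry.
by apply: eq_bigr => m _; rewrite trE2.
Qed.

Lemma span_indep_mx (Q : 'I_n -> 'M[L]_d) (co : 'M[L]_d -> 'I_n -> L) :
  n = (d * d)%N -> (forall M, M = \sum_m co M m *: Q m) ->
  forall al : 'I_n -> L, \sum_m al m *: Q m = 0 -> forall m, al m = 0.
Proof.
move=> en H al hal; rewrite -cardK in en.
apply: (@span_indep _ _ _ (fun m k => Q m k.1 k.2)
  (fun v => co (\matrix_(i, j) v (i, j))) en).
  move=> v [i j] /=.
  have := congr1 (fun M : 'M_d => M i j) (H (\matrix_(i, j) v (i, j))).
  by rewrite sum_entry mxE => ->.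
move=> [i j] /=.
have := congr1 (fun M : 'M_d => M i j) hal.
rewrite sum_entry mxE; exact: id.
Qed.

Definition T i j a b := \sum_m x m i 0 * x m j 0 * (cj (x m a 0) * cj (x m b 0)).
Definition dd (i j a b : 'I_d) : L :=
  (i == a)%:R * (j == b)%:R + (i == b)%:R * (j == a)%:R.

Lemma tens2E m i j : tens2 (x m) i j = x m i 0 * x m j 0.
Proof. by rewrite !mxE big_ord1 mxE. Qed.

Lemma deltaE (i0 j0 i j : 'I_d) : delta_mx i0 j0 i j = (i == i0)%:R * (j == j0)%:R :> L.
Proof. by rewrite mxE -natrM mulnb. Qed.

Lemma sum2_delta (f : 'I_d -> 'I_d -> L) a b :
  \sum_s \sum_t f s t * delta_mx a b s t = f a b.
Proof.
under eq_bigr do under eq_bigr do rewrite deltaE mulrA mulrAC.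
rewrite -(sum_delta_r a (fun s => f s b)); apply: eq_bigr => s _.
by rewrite -(sum_delta_r b (fun t => f s t * (s == a)%:R)) ; apply: eq_bigr => t _; rewrite mulrAC.
Qed.

Lemma PhiE M i j : Phi M i j = \sum_s \sum_t M t s * T i s j t.
Proof.
rewrite /Phi sum_entry.
under eq_bigr do rewrite trE big_distrl /= mxE.
rewrite exchange_big /=; apply: eq_bigr => s _.
under eq_bigr do rewrite big_distrl /=.
rewrite exchange_big /=; apply: eq_bigr => t _.
rewrite /T big_distrr /=; apply: eq_bigr => m _; rewrite !mxE /cj; ring.
Qed.

Lemma Phi_of_T c2 : (forall i j a b, 2%:R * T i j a b = c2 * dd i j a b) ->
  forall M, 2%:R *: Phi M = c2 *: (M + \tr M *: 1%:M).
Proof.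
move=> H M; apply/matrixP => i j.
rewrite !mxE PhiE big_distrr /=.
under eq_bigr do rewrite big_distrr /=.
under eq_bigr do under eq_bigr do rewrite mulrCA H /dd.
transitivity (c2 * (i == j)%:R * (\sum_s \sum_t (M t s * (s == t)%:R))
   + c2 * (\sum_s \sum_t (M t s * ((i == t)%:R * (s == j)%:R)))).
  rewrite !mulr_sumr -big_split; apply: eq_bigr => s _.
  rewrite !mulr_sumr -big_split; apply: eq_bigr => t _; rewrite /=; ring.
rewrite sum2_diag sum2_dd /mxtrace; ring.
Qed.

Lemma T_of_Phi c2 : (forall M, 2%:R *: Phi M = c2 *: (M + \tr M *: 1%:M)) ->
  forall i j a b, 2%:R * T i j a b = c2 * dd i j a b.
Proof.
move=> H i j a b.
have := congr1 (fun M : 'M_d => M i a) (H (delta_mx b j)).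
rewrite mxE [in RHS]mxE PhiE.
have -> : \sum_s \sum_t delta_mx b j t s * T i s a t = T i j a b.
  rewrite exchange_big /=.
  under eq_bigr do under eq_bigr do rewrite mulrC.
  exact: sum2_delta.
have trd : \tr (delta_mx b j) = (b == j)%:R :> L.
  rewrite /mxtrace; under eq_bigr do rewrite deltaE.
  by rewrite -(sum_delta b (fun k => (k == j)%:R)); apply: eq_bigr => k _; rewrite mulrC.
move=> ->; congr (_ * _).
rewrite trd !mxE -natrM mulnb /dd [a == j]eq_sym [b == j]eq_sym -!mulnb !natrM; ring.
Qed.

Lemma ipmE m V : ipm q (tens2 (x m)) V =
  \sum_a \sum_b cj (x m a 0) * cj (x m b 0) * V a b.
Proof.
by apply: eq_bigr => a _; apply: eq_bigr => b _; rewrite tens2E /qconj exprMn.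
Qed.

Lemma T_of_sym c2 :
  (forall V, symsub V -> \sum_m ipm q (tens2 (x m)) V *: tens2 (x m) = c2 *: V) ->
  forall i j a b, 2%:R * T i j a b = c2 * dd i j a b.
Proof.
move=> H i j a b.
pose V : 'M[L]_d := delta_mx a b + delta_mx b a.
have sV : symsub V by rewrite /symsub /V linearD /= !trmx_delta addrC.
have := congr1 (fun M : 'M_d => M i j) (H V sV).
rewrite sum_entry mxE /V mxE !deltaE -/(dd i j a b) => <-.
rewrite /T mulr_sumr; apply: eq_bigr => m _.
rewrite ipmE.
under eq_bigr do under eq_bigr do rewrite mxE mulrDr.
under eq_bigr do rewrite big_split /=.
rewrite big_split /= !sum2_delta tens2E; ring.
Qed.

Lemma sym_of_T c2 : (forall i j a b, 2%:R * T i j a b = c2 * dd i j a b) ->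
  forall V, symsub V -> \sum_m ipm q (tens2 (x m)) V *: tens2 (x m) = c2 *: V.
Proof.
move=> H V /eqP sV; apply/matrixP => i j.
apply: (mulfI two_neq0).
rewrite sum_entry mxE.
transitivity (\sum_a \sum_b V a b * (2%:R * T i j a b)).
  transitivity (\sum_m \sum_a \sum_b V a b * (2%:R * (x m i 0 * x m j 0 * (cj (x m a 0) * cj (x m b 0))))).
    rewrite mulr_sumr; apply: eq_bigr => m _; rewrite ipmE tens2E big_distrl mulr_sumr /=.
    apply: eq_bigr => a _; rewrite big_distrl mulr_sumr /=; apply: eq_bigr => b _; ring.
  rewrite exchange_big /=; apply: eq_bigr => a _; rewrite exchange_big /=; apply: eq_bigr => b _.
  by rewrite /T !mulr_sumr.
under eq_bigr do under eq_bigr do rewrite H /dd.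
transitivity (c2 * (\sum_a \sum_b V a b * ((a == i)%:R * (b == j)%:R)
   + \sum_a \sum_b V a b * ((a == j)%:R * (b == i)%:R))).
  rewrite -big_split mulr_sumr; apply: eq_bigr => a _.
  rewrite -big_split mulr_sumr; apply: eq_bigr => b _.
  rewrite [i == a]eq_sym [j == b]eq_sym [i == b]eq_sym [j == a]eq_sym /=; ring.
rewrite !sum2_pt.
have -> : V j i = V i j by rewrite -{1}sV mxE.
ring.
Qed.

Lemma trPE (M : 'M[L]_d) k : \tr (P k *m M) = \tr (M *m P k).
Proof. exact: mxtrace_mulC. Qed.

Lemma tr1M (M : 'M[L]_d) : \tr (1%:M *m M) = \tr M.
Proof. by rewrite mul1mx. Qed.

Lemma sym_frame_of_T c2 : c2 != 0 -> inFq q c2 ->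
  (forall i j a b, 2%:R * T i j a b = c2 * dd i j a b) ->
  tight_frame q (@ipm L q d) (@symsub L d) (fun k => tens2 (x k)) c2.
Proof.
move=> c20 hc2 HT; have hid := sym_of_T HT.
split => //.
- by move=> k; rewrite /symsub /tens2 trmx_mul trmxK.
- move=> V; split.
    move=> sV; exists (fun m => c2^-1 * ipm q (tens2 (x m)) V).
    under eq_bigr do rewrite -scalerA.
    by rewrite -scaler_sumr hid // scalerA mulVf // scale1r.
  move=> [coef ->]; rewrite /symsub linear_sum /=; apply/eqP; apply: eq_bigr => m _.
  by rewrite linearZ /= /tens2 trmx_mul trmxK.
Qed.

Lemma Phi1 : Phi 1%:M = \sum_m \tr (P m) *: P m.
Proof. by apply: eq_bigr => m _; rewrite mulmx1. Qed.

Lemma Psi1 h : Psi h 1%:M = (h * (d.+1)%:R) *: 1%:M.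
Proof.
rewrite /Psi mxtrace1 -[X in X + _]scale1r -scalerDl scalerA.
by rewrite -natr1 addrC.
Qed.

Lemma BC_main a b c1 : n = (d * d)%N -> condC q a b c1 x ->
  proj2design q a c1 (2%:R * (a ^+ 2 - b)) x.
Proof.
move=> en [[ha [hb hc1]] hab hii hiii [_ _ fr norm off]].
have fr' := fr; case: fr' => _ _ _ frid.
set h := a ^+ 2 - b.
have h0 : h != 0 by rewrite subr_eq0.
have sumP : \sum_k P k = c1 *: 1%:M by apply: sumP_frame => v; exact: frid.
have trPk k : \tr (P k) = a by rewrite trP norm.
have trPPkl k l : \tr (P k *m P l) = h * (k == l)%:R + b.
  rewrite trPP; case: eqP => [<-|/eqP kl]; first by rewrite norm mulr1 /h expr2; ring.
  by rewrite off // mulr0 add0r.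
have key : b * c1 = h * a.
  have [a0|a0] := eqVneq a 0.
    have d1 := hiii a0.
    have dn0 : (d%:R : L) != 0.
      apply/eqP => dz; move: d1; rewrite -natr1 dz add0r => /eqP.
      by rewrite oner_eq0.
    have : \tr (\sum_k P k) = c1 * d%:R by rewrite sumP mxtraceZ mxtrace1.
    have z : \sum_k \tr (P k) = 0 by apply: big1 => k _; rewrite trPk a0.
    rewrite raddf_sum /= z => /esym /eqP; rewrite mulf_eq0 (negbTE dn0) orbF => /eqP ->.
    by rewrite a0 !mulr0.
  by rewrite /h (hii a0) divfK.
have PhiP l : Phi (P l) = Psi h (P l).
  rewrite /Phi /Psi.
  under eq_bigr do rewrite trPPkl.
  under eq_bigr do rewrite scalerDl.
  rewrite big_split /= -scaler_sumr sumP scalerA key.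
  rewrite (bigD1 l) //= eqxx mulr1 big1 ?addr0; last first.
    by move=> m /negbTE ml; rewrite ml mulr0 scale0r.
  by rewrite trPk scalerDr scalerA.
have PhiPsi : forall M, Phi M = Psi h M.
  have [a0|a0] := eqVneq a 0.
    have d1 := hiii a0.
    have dn0 : (d%:R : L) != 0.
      apply/eqP => dz; move: d1; rewrite -natr1 dz add0r => /eqP.
      by rewrite oner_eq0.
    have dpos : (0 < d)%N by case: (d) dn0 => //; rewrite eqxx.
    have npos : (0 < n)%N by rewrite en muln_gt0 dpos.
    pose m0 := Ordinal npos.
    have hb' : h = - b by rewrite /h a0 expr0n /= sub0r.
    have b0 : b != 0 by rewrite -oppr_eq0 -hb'.
    pose Q m := if m == m0 then 1%:M else P m.
    pose W m := if m == m0 then (d%:R)^-1 *: (1%:M : 'M[L]_d)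
                else b^-1 *: (P m0 - P m).
    have dual : forall i j, \tr (Q i *m W j) = (i == j)%:R.
      move=> i j; rewrite /Q /W.
      case: (eqVneq i m0) => [ei|im]; case: (eqVneq j m0) => [ej|jm].
      - by rewrite ei ej eqxx mul1mx mxtraceZ mxtrace1 mulVf.
      - rewrite mul1mx mxtraceZ linearB /= !trPk subrr mulr0.
        by rewrite ei eq_sym (negbTE jm).
      - by rewrite -scalemxAr mulmx1 mxtraceZ trPk a0 mulr0 ej (negbTE im).
      - rewrite -scalemxAr mxtraceZ mulmxBr linearB /= !trPPkl (negbTE im) hb'.
        by rewrite mulr0 add0r; field.
    apply: (agree (dual_span_mx en dual)) => m.
    rewrite /Q; case: eqP => _; last exact: PhiP.
    rewrite Phi1 Psi1 d1 mulr0 scale0r.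
    by apply: big1 => k _; rewrite trPk a0 scale0r.
  pose W m := h^-1 *: (P m - (b / a) *: (1%:M : 'M[L]_d)).
  have dual : forall i j, \tr (P i *m W j) = (i == j)%:R.
    move=> i j; rewrite /W -scalemxAr mxtraceZ mulmxBr linearB /= trPPkl.
    rewrite -scalemxAr mulmx1 mxtraceZ trPk; field.
    by rewrite h0 a0.
  exact: (agree (dual_span_mx en dual)).
split => //.
apply: sym_frame_of_T.
- by rewrite mulf_eq0 negb_or two_neq0 h0.
- by apply: inFqM => //; apply: inFqB => //; rewrite expr2; exact: inFqM.
apply: T_of_Phi => M; rewrite PhiPsi /Psi scalerA //.
Qed.

Definition Qf (m0 : 'I_n) m : 'M[L]_d := if m == m0 then 1%:M else P m.
Definition Wf (m0 : 'I_n) (b : L) m : 'M[L]_d :=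
  if m == m0 then (d%:R)^-1 *: 1%:M else b^-1 *: (P m0 - P m).

Section Gram.
Variables (a b h c1 : L).
Hypothesis trPk : forall k, \tr (P k) = a.
Hypothesis trPPkl : forall k l, \tr (P k *m P l) = h * (k == l)%:R + b.

Lemma dualP : a != 0 -> h != 0 ->
  forall i j, \tr (P i *m (h^-1 *: (P j - (b / a) *: 1%:M))) = (i == j)%:R.
Proof.
move=> a0 h0 i j; rewrite -scalemxAr mxtraceZ mulmxBr linearB /= trPPkl.
rewrite -scalemxAr mulmx1 mxtraceZ trPk; field.
by rewrite h0 a0.
Qed.

Lemma dualQ m0 : a = 0 -> h = - b -> b != 0 -> (d%:R : L) != 0 ->
  forall i j, \tr (Qf m0 i *m Wf m0 b j) = (i == j)%:R.
Proof.
move=> a0 hb' b0 dn0 i j; rewrite /Qf /Wf.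
case: (eqVneq i m0) => [ei|im]; case: (eqVneq j m0) => [ej|jm].
- by rewrite ei ej eqxx mul1mx mxtraceZ mxtrace1 mulVf.
- rewrite mul1mx mxtraceZ linearB /= !trPk subrr mulr0.
  by rewrite ei eq_sym (negbTE jm).
- by rewrite -scalemxAr mulmx1 mxtraceZ trPk a0 mulr0 ej (negbTE im).
- rewrite -scalemxAr mxtraceZ mulmxBr linearB /= !trPPkl (negbTE im) hb'.
  by rewrite mulr0 add0r; field.
Qed.

Hypothesis sumP : \sum_k P k = c1 *: 1%:M.

Lemma PhiP_gen l : Phi (P l) = h *: P l + (b * c1) *: 1%:M.
Proof.
rewrite /Phi.
under eq_bigr do rewrite trPPkl.
under eq_bigr do rewrite scalerDl.
rewrite big_split /= -scaler_sumr sumP scalerA.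
rewrite (bigD1 l) //= eqxx mulr1 big1 ?addr0 //.
by move=> m /negbTE ml; rewrite ml mulr0 scale0r.
Qed.
End Gram.

Lemma frame_nonempty c1 : (0 < d)%N -> tight_frame q (@ipv L q d) predT x c1 -> (0 < n)%N.
Proof.
move=> dpos [_ _ sp _]; case: (posnP n) => [n0|//].
have [coef he] := (sp (delta_mx (Ordinal dpos) 0)).1 isT.
have : delta_mx (Ordinal dpos) 0 = 0 :> 'cV[L]_d.
  rewrite he big1 // => k _; have := ltn_ord k; by rewrite {2}n0.
move/matrixP/(_ (Ordinal dpos) 0); rewrite !mxE !eqxx /= => /eqP.
by rewrite oner_eq0.
Qed.

Lemma Psi_N h s M : h != 0 ->
  Psi h (h^-1 *: (M - s *: 1%:M)) = M + (\tr M - s * (d.+1)%:R) *: 1%:M.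
Proof.
move=> h0.
have trN : \tr (h^-1 *: (M - s *: 1%:M)) = h^-1 * (\tr M - s * d%:R).
  by rewrite mxtraceZ linearB /= mxtraceZ mxtrace1.
rewrite /Psi trN -natr1; apply/matrixP => i j; rewrite !mxE; field.
exact: h0.
Qed.

Lemma frame_x_nz c1 : (0 < d)%N -> tight_frame q (@ipv L q d) predT x c1 ->
  ~ (forall k, x k = 0).
Proof.
move=> dpos [_ _ sp _] hx.
have [coef he] := (sp (delta_mx (Ordinal dpos) 0)).1 isT.
have : delta_mx (Ordinal dpos) 0 = 0 :> 'cV[L]_d.
  rewrite he big1 // => k _; by rewrite hx scaler0.
move/matrixP/(_ (Ordinal dpos) 0); rewrite !mxE !eqxx /= => /eqP.
by rewrite oner_eq0.
Qed.

Lemma ACB_main a' c1' c2' a b c1 : proj2design q a' c1' c2' x -> condC q a b c1 x ->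
  n = (d * d)%N.
Proof.
move=> [ha' norm' fr' sfr'] [[ha [hb hc1]] hab hii hiii [_ _ fr norm off]].
have normd0 : d = 0%N -> forall m : 'I_n, a = 0.
  move=> d0 m; rewrite -(norm m) /ipv big1 // => i; have := ltn_ord i; by rewrite {2}d0.
case: (posnP d) => [d0|dpos].
  case: (posnP n) => [n0|npos]; first by rewrite n0 d0.
  have a0 := normd0 d0 (Ordinal npos).
  by move: (hiii a0); rewrite d0 => /eqP; rewrite oner_eq0.
have npos := frame_nonempty dpos fr.
pose m0 := Ordinal npos.
pose i0 := Ordinal dpos.
have eaa : a' = a by rewrite -(norm' m0) norm.
subst a'.
have fr0 := fr; case: fr0 => _ _ _ frid.
have fr0' := fr'; case: fr0' => _ _ _ frid'.
have sumP : \sum_k P k = c1 *: 1%:M by apply: sumP_frame => v; exact: frid.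
have sumP' : \sum_k P k = c1' *: 1%:M by apply: sumP_frame => v; exact: frid'.
have ec : c1' = c1.
  have := congr1 (fun M : 'M_d => M i0 i0) (etrans (esym sumP') sumP).
  by rewrite !mxE eqxx !mulr1.
subst c1'.
case: sfr' => _ _ _ sid.
have HPhi := Phi_of_T (T_of_sym sid).
set h' := c2' / 2%:R.
have PhiPsi : forall M, Phi M = Psi h' M.
  move=> M; apply: (@scalerI _ _ (2%:R : L) two_neq0).
  by rewrite HPhi /Psi scalerA /h' mulrC divfK.
set h := a ^+ 2 - b.
have h0 : h != 0 by rewrite subr_eq0.
have trPk k : \tr (P k) = a by rewrite trP norm.
have trPPkl k l : \tr (P k *m P l) = h * (k == l)%:R + b.
  rewrite trPP; case: eqP => [<-|/eqP kl]; first by rewrite norm mulr1 /h expr2; ring.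
  by rewrite off // mulr0 add0r.
have [a0|a0] := eqVneq a 0; last first.
  apply/eqP; rewrite eqn_leq; apply/andP; split.
    exact: (@dual_card_mx P (fun j => h^-1 *: (P j - (b / a) *: 1%:M)) (dualP trPk trPPkl a0 h0)).
  have c10 : c1 != 0.
    apply/eqP => c0; move/eqP: h0; apply; rewrite /h (hii a0) c0 mulr0 mul0r.
    done.
  have e1 : (a * c1) *: (1%:M : 'M[L]_d) = (h' * (d.+1)%:R) *: 1%:M.
    rewrite -Psi1 -PhiPsi Phi1.
    under eq_bigr do rewrite trPk.
    by rewrite -scaler_sumr sumP scalerA.
  have {}e1 : a * c1 = h' * (d.+1)%:R.
    by move/matrixP/(_ i0 i0): e1; rewrite !mxE eqxx !mulr1.
  have : h' * (d.+1)%:R != 0 by rewrite -e1 mulf_eq0 negb_or a0 c10.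
  rewrite mulf_eq0 negb_or => /andP [h'0 d10].
  apply: (@span_card P (fun M m => \tr (P m *m (h'^-1 *: (M - (\tr M / (d.+1)%:R) *: 1%:M))))).
  move=> M.
  rewrite -/(Phi _) PhiPsi Psi_N // divfK // subrr scale0r addr0 //.
have d1 := hiii a0.
have dn0 : (d%:R : L) != 0.
  apply/eqP => dz; move: d1; rewrite -natr1 dz add0r => /eqP.
  by rewrite oner_eq0.
have c10 : c1 = 0.
  have : \tr (\sum_k P k) = c1 * d%:R by rewrite sumP mxtraceZ mxtrace1.
  have z : \sum_k \tr (P k) = 0 by apply: big1 => k _; rewrite trPk a0.
  rewrite raddf_sum /= z => /esym /eqP; rewrite mulf_eq0 (negbTE dn0) orbF => /eqP ->.
  done.
have hb' : h = - b by rewrite /h a0 expr0n /= sub0r.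
have b0 : b != 0 by rewrite -oppr_eq0 -hb'.
apply/eqP; rewrite eqn_leq; apply/andP; split.
  exact: (@dual_card_mx (Qf m0) (Wf m0 b) (dualQ trPk trPPkl m0 a0 hb' b0 dn0)).
have h'0 : h' != 0.
  apply/negP => /eqP h'0; apply: (frame_x_nz dpos fr) => l.
  have : Phi (P l) = 0 by rewrite PhiPsi /Psi h'0 scale0r.
  rewrite (PhiP_gen trPPkl sumP) c10 mulr0 scale0r addr0 hb' => /eqP.
  rewrite scaler_eq0 oppr_eq0 (negbTE b0) /= => /eqP Pl; apply/matrixP => i j.
  rewrite (ord1 j) mxE.
  have := congr1 (fun M : 'M_d => M i i) Pl; rewrite !mxE => /eqP.
  by rewrite mulf_eq0 cj_eq0 orbb => /eqP.
pose s (M : 'M[L]_d) := - \tr M.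
pose t (M : 'M[L]_d) (m : 'I_n) := \tr (P m *m (h'^-1 *: (M - s M *: 1%:M))).
apply: (@span_card (Qf m0) (fun M m => if m == m0 then s M else t M m - t M m0)).
move=> M.
have eP : \sum_m t M m *: P m = M - s M *: 1%:M.
  rewrite -/(Phi _) PhiPsi Psi_N // d1 mulr0 subr0 /s scaleNr opprK //.
have e2 : \sum_m (t M m - t M m0) *: P m = M - s M *: 1%:M.
  rewrite -eP; under eq_bigr do rewrite scalerBl.
  by rewrite sumrB -scaler_sumr sumP c10 scale0r scaler0 subr0.
rewrite (bigD1 m0) //= /Qf eqxx.
have -> : \sum_(m | m != m0) (if m == m0 then s M else t M m - t M m0) *:
           (if m == m0 then 1%:M else P m) = \sum_m (t M m - t M m0) *: P m.
  rewrite [RHS](bigD1 m0) //= subrr scale0r add0r.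
  by apply: eq_bigr => m /negbTE ->.
by rewrite e2 addrC subrK.
Qed.

Lemma T_zero_false : (0 < d)%N -> n = (d * d)%N ->
  (forall V, symsub V -> exists coef : 'I_n -> L, V = \sum_m coef m *: tens2 (x m)) ->
  (forall i j a b, T i j a b = 0) -> False.
Proof.
move=> dpos en sp T0.
pose S := {p : 'I_d * 'I_d | (p.1 <= p.2)%N}.
pose B (s : S) : 'M[L]_d := delta_mx (val s).1 (val s).2 + delta_mx (val s).2 (val s).1.
have symB s : symsub (B s) by rewrite /symsub /B linearD /= !trmx_delta addrC.
pose v (s : S) := proj1_sig (constructive_indefinite_description _ (sp _ (symB s))).
have hv s : B s = \sum_m v s m *: tens2 (x m).
  exact: (proj2_sig (constructive_indefinite_description _ (sp _ (symB s)))).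
pose e (s t : S) := B s (val t).1 (val t).2.
have eE s t : e s t = (((val t).1 == (val s).1) && ((val t).2 == (val s).2)
                   + (((val t).1 == (val s).2) && ((val t).2 == (val s).1)))%:R.
  by rewrite /e /B !mxE natrD.
have e0 s t : s != t -> e s t = 0.
  move=> st; rewrite eE.
  case: s t st => [[s1 s2] hs] [[t1 t2] ht] st /=.
  have h1 : ((t1 == s1) && (t2 == s2)) = false.
    apply/negP => /andP [/eqP e1 /eqP e2]; move/negP: st; apply.
    by apply/eqP/val_inj; rewrite /= e1 e2.
  have h2 : ((t1 == s2) && (t2 == s1)) = false.
    apply/negP => /andP [/eqP e1 /eqP e2]; move/negP: st; apply.
    apply/eqP/val_inj => /=; rewrite /= in hs ht.
    have es : s1 = s2 by apply: ord_inj; apply/eqP; rewrite eqn_leq hs /= -e1 -e2 ht.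
    by rewrite e1 e2 es.
  by rewrite h1 h2.
have e1 s : e s s != 0.
  rewrite eE !eqxx /=; case: ((val s).1 =P (val s).2) => [->|ne].
    by rewrite eqxx.
  have -> : ((val s).2 == (val s).1) = false by apply/eqP => h; apply: ne.
  by rewrite oner_eq0.
have eN s t : e s t = ((((val t).1 == (val s).1) && ((val t).2 == (val s).2)
                   + (((val t).1 == (val s).2) && ((val t).2 == (val s).1)))%N)%:R.
  exact: eE.
pose u (s : S) (m : 'I_n) := 2%:R * (cj (x m (val s).1 0) * cj (x m (val s).2 0)).
pose g (t : S) := 2%:R * e t t.
have g0 t : g t != 0 by rewrite mulf_eq0 negb_or two_neq0 e1.
have Pv s t : \sum_m v s m * (x m (val t).1 0 * x m (val t).2 0) = e s t.
  rewrite /e hv sum_entry; apply: eq_bigr => m _; by rewrite tens2E.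
have cju t m : cj (u t m) = 2%:R * (x m (val t).1 0 * x m (val t).2 0).
  by rewrite /u !cjM cj_nat !cjK.
have Puu s t : \sum_m u s m * cj (u t m) = 0.
  transitivity (4%:R * T (val t).1 (val t).2 (val s).1 (val s).2); last by rewrite T0 mulr0.
  rewrite /T mulr_sumr; apply: eq_bigr => m _; rewrite cju /u.
  rewrite (_ : 4%:R = 2%:R * 2%:R :> L); last by rewrite -natrM.
  ring.
have Pvu s t : \sum_m v s m * cj (u t m) = 2%:R * e s t.
  rewrite -Pv mulr_sumr; apply: eq_bigr => m _; rewrite cju; ring.
have Puv s t : \sum_m u s m * cj (v t m) = 2%:R * e t s.
  transitivity (cj (\sum_m v t m * cj (u s m))).
    rewrite cj_sum; apply: eq_bigr => m _; rewrite cjM cjK mulrC //.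
  by rewrite Pvu cjM cj_nat eN cj_nat.
pose Y (t : S) (m : 'I_n) := cj (u t m) / g t.
pose A (k t : S) := \sum_m v k m * cj (v t m).
pose X (t : S) (m : 'I_n) := cj (v t m) / g t - \sum_k A k t / g t * Y k m.
have uY s t : \sum_m u s m * Y t m = 0.
  by rewrite /Y; under eq_bigr do rewrite mulrA; rewrite -mulr_suml Puu mul0r.
have vY s t : \sum_m v s m * Y t m = (s == t)%:R.
  rewrite /Y; under eq_bigr do rewrite mulrA; rewrite -mulr_suml Pvu.
  case: (eqVneq s t) => [->|st].
    by rewrite /g mulfV // mulf_eq0 negb_or two_neq0 e1.
  by rewrite e0 // mulr0 mul0r.
have uX s t : \sum_m u s m * X t m = (s == t)%:R.
  rewrite /X; under eq_bigr do rewrite mulrBr mulr_sumr.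
  rewrite sumrB exchange_big /=.
  under [X in _ - X]eq_bigr do under eq_bigr do rewrite mulrCA.
  under [X in _ - X]eq_bigr do rewrite -mulr_sumr uY mulr0.
  rewrite big1_eq subr0.
  under eq_bigr do rewrite mulrA; rewrite -mulr_suml Puv.
  case: (eqVneq s t) => [->|st].
    by rewrite /g mulfV // mulf_eq0 negb_or two_neq0 e1.
  by rewrite e0 1?eq_sym // mulr0 mul0r.
have vX s t : \sum_m v s m * X t m = 0.
  rewrite /X; under eq_bigr do rewrite mulrBr mulr_sumr.
  rewrite sumrB exchange_big /=.
  under [X in _ - X]eq_bigr do under eq_bigr do rewrite mulrCA.
  under [X in _ - X]eq_bigr do rewrite -mulr_sumr vY.
  under [X in _ - X]eq_bigr do rewrite eq_sym.
  rewrite (sum_delta_r s (fun k => A k t / g t)).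
  under eq_bigr do rewrite mulrA; rewrite -mulr_suml subrr //.
pose R (i : S + S) := match i with inl s => u s | inr s => v s end.
pose C (j : S + S) := match j with inl t => X t | inr t => Y t end.
have := @dual_card _ _ _ R C.
have dualRC : forall i j, \sum_m R i m * C j m = (i == j)%:R.
  by move=> [s|s] [t|t] /=; rewrite ?uX ?uY ?vX ?vY.
move/(_ dualRC); rewrite card_sum card_ord en card_sig.
by rewrite leqNgt card_le_half.
Qed.

Lemma ABC_main a c1 c2 : n = (d * d)%N -> proj2design q a c1 c2 x ->
  exists a b c1 : L, condC q a b c1 x.
Proof.
move=> en [ha norm fr sfr].
case: (posnP d) => [d0|dpos].
  have n0 : n = 0%N by rewrite en d0.
  have z : forall w : 'cV[L]_d, w = 0.
    by move=> w; apply/matrixP => i j; have := ltn_ord i; rewrite {2}d0.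
  exists 1, (-1), (- 2%:R); split.
  - by split; [exact: (inFq_nat 1) | split; [apply: inFqN; exact: (inFq_nat 1) |
      apply: inFqN; exact: inFq_nat]].
  - rewrite expr1n; apply/eqP => /eqP; rewrite -subr_eq0 opprK -mulr2n.
    by rewrite (negbTE two_neq0).
  - by move=> _; rewrite expr1n opprK mulN1r opprK divr1 -mulr2n.
  - by move=> /eqP; rewrite oner_eq0.
  split.
  - exact: (inFq_nat 1).
  - by apply: inFqN; exact: (inFq_nat 1).
  - split.
    + by apply: inFqN; exact: inFq_nat.
    + by [].
    + move=> w; split => // _; exists (fun _ => 0).
      by rewrite (z w) (z (\sum_k _)).
    + by move=> w; rewrite (z w) (z (\sum_k _)) (z (_ *: _)).
  - by move=> k; have := ltn_ord k; rewrite {2}n0.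
  - by move=> k; have := ltn_ord k; rewrite {2}n0.
have npos : (0 < n)%N by rewrite en muln_gt0 dpos.
pose m0 := Ordinal npos.
pose i0 := Ordinal dpos.
have fr0 := fr; case: fr0 => hc1 _ _ frid.
have sumP : \sum_k P k = c1 *: 1%:M by apply: sumP_frame => v; exact: frid.
have sfr0 := sfr; case: sfr0 => hc2 _ ssp sid.
have HT := T_of_sym sid.
have HPhi := Phi_of_T HT.
set h := c2 / 2%:R.
have PhiPsi : forall M, Phi M = Psi h M.
  move=> M; apply: (@scalerI _ _ (2%:R : L) two_neq0).
  by rewrite HPhi /Psi scalerA /h mulrC divfK.
have hF : inFq q h by apply: inFqM => //; apply: inFqV; exact: inFq_nat.
have h0 : h != 0.
  apply/eqP => h0; apply: (T_zero_false dpos en) => [V sV|i j a' b'].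
    by have [coef ->] := (ssp V).1 sV; exists coef.
  apply: (mulfI two_neq0); rewrite mulr0 HT.
  by move: h0; rewrite /h => /eqP; rewrite mulf_eq0 invr_eq0 (negbTE two_neq0) orbF => /eqP ->; rewrite mul0r.
have trPk k : \tr (P k) = a by rewrite trP norm.
have trPP0 k l : \tr (P k *m P l) = ipv q (x k) (x l) * ipv q (x l) (x k) by exact: trPP.
have Phi1e : Phi 1%:M = (a * c1) *: 1%:M.
  rewrite Phi1; under eq_bigr do rewrite trPk.
  by rewrite -scaler_sumr sumP scalerA.
have [d1|d1] := eqVneq ((d.+1)%:R : L) 0; last first.
  pose co M m := \tr (P m *m (h^-1 *: (M - (\tr M / (d.+1)%:R) *: 1%:M))).
  have spP : forall M, M = \sum_m co M m *: P m.
    by move=> M; rewrite -/(Phi _) PhiPsi Psi_N // divfK // subrr scale0r addr0.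
  have indep := span_indep_mx en spP.
  have c10 : c1 != 0.
    apply/eqP => c0; have := indep (fun _ => 1).
    have : \sum_m (fun _ : 'I_n => 1 : L) m *: P m = 0.
      by under eq_bigr do rewrite scale1r; rewrite sumP c0 scale0r.
    move=> H /(_ H m0) /eqP; by rewrite oner_eq0.
  pose b := h * a / c1.
  have Gram l m : \tr (P m *m P l) = h * (m == l)%:R + b.
    have := indep (fun m => \tr (P m *m P l) - h * (m == l)%:R - b).
    have : \sum_m (\tr (P m *m P l) - h * (m == l)%:R - b) *: P m = 0.
      under eq_bigr do rewrite !scalerBl.
      rewrite !sumrB -/(Phi _) PhiPsi -scaler_sumr sumP /Psi trPk.
      rewrite (bigD1 l) //= eqxx mulr1 big1 ?addr0; last first.
        by move=> k /negbTE ->; rewrite mulr0 scale0r.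
      rewrite scalerA /b divfK // scalerDr scalerA; apply/eqP; rewrite subr_eq0.
      by apply/eqP; rewrite addrC addKr.
    move=> H /(_ H m) /eqP; rewrite subr_eq0 subr_eq => /eqP ->.
    by rewrite addrC.
  have aa : a ^+ 2 = h + b.
    have := Gram m0 m0; rewrite trPP0 norm eqxx mulr1 -expr2 //.
  exists a, b, c1; split.
  - split => //; split => //; apply: inFqM; [exact: inFqM | exact: inFqV].
  - by rewrite aa -subr_eq0 addrK.
  - by move=> a0; rewrite aa addrK /b; field; rewrite a0 c10.
  - move=> a0; move: aa; rewrite /b a0 expr0n /= mulr0 mul0r addr0 => /esym/eqP.
    by rewrite (negbTE h0).
  split => //.
  - apply: inFqM; [exact: inFqM | exact: inFqV].
  - move=> k l kl; rewrite -trPP0 Gram.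
    by rewrite (negbTE kl) mulr0 add0r.
have dn0 : (d%:R : L) != 0.
  apply/eqP => dz; move: d1; rewrite -natr1 dz add0r => /eqP.
  by rewrite oner_eq0.
have dm1 : (d%:R : L) = -1 by apply/eqP; rewrite -addr_eq0 natr1 d1.
have ac : a * c1 = 0.
  have := congr1 (fun M : 'M_d => M i0 i0) (etrans (esym Phi1e) (PhiPsi 1%:M)).
  by rewrite Psi1 d1 mulr0 scale0r !mxE eqxx mulr1.
have trS : a *+ n = c1 * d%:R.
  have : \tr (\sum_k P k) = c1 * d%:R by rewrite sumP mxtraceZ mxtrace1.
  rewrite raddf_sum /=; under eq_bigr do rewrite trPk.
  by rewrite sumr_const card_ord.
have a0 : a = 0.
  apply/eqP/negP => /negP a0.
  have c0 : c1 = 0 by move/eqP: ac; rewrite mulf_eq0 (negbTE a0) /= => /eqP.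
  move: trS; rewrite c0 mul0r -mulr_natr en natrM dm1 mulrNN mulr1 mulr1 => /eqP.
  by rewrite (negbTE a0).
have c10 : c1 = 0.
  move: trS; rewrite a0 mul0rn => /esym/eqP; rewrite mulf_eq0 (negbTE dn0) orbF.
  by move/eqP.
pose s (M : 'M[L]_d) := - \tr M.
pose t (M : 'M[L]_d) (m : 'I_n) := \tr (P m *m (h^-1 *: (M - s M *: 1%:M))).
have spQ : forall M, M = \sum_m (if m == m0 then s M else t M m - t M m0) *: Qf m0 m.
  move=> M.
  have eP : \sum_m t M m *: P m = M - s M *: 1%:M.
    rewrite -/(Phi _) PhiPsi Psi_N // d1 mulr0 subr0 /s scaleNr opprK //.
  have e2 : \sum_m (t M m - t M m0) *: P m = M - s M *: 1%:M.
    rewrite -eP; under eq_bigr do rewrite scalerBl.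
    by rewrite sumrB -scaler_sumr sumP c10 scale0r scaler0 subr0.
  rewrite (bigD1 m0) //= /Qf eqxx.
  have -> : \sum_(m | m != m0) (if m == m0 then s M else t M m - t M m0) *:
             (if m == m0 then 1%:M else P m) = \sum_m (t M m - t M m0) *: P m.
    rewrite [RHS](bigD1 m0) //= subrr scale0r add0r.
    by apply: eq_bigr => m /negbTE ->.
  by rewrite e2 addrC subrK.
have indep := span_indep_mx en spQ.
have Gram l m : \tr (P m *m P l) = h * (m == l)%:R - h.
  pose r m := \tr (P m *m P l) - h * (m == l)%:R.
  have sr : \sum_m r m *: P m = 0.
    rewrite /r; under eq_bigr do rewrite scalerBl.
    rewrite sumrB -/(Phi _) PhiPsi /Psi trPk a0 scale0r addr0.
    rewrite (bigD1 l) //= eqxx mulr1 big1 ?addr0 ?subrr //.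
    by move=> k /negbTE ->; rewrite mulr0 scale0r.
  have sr' : \sum_m (r m - r m0) *: Qf m0 m = 0.
    transitivity (\sum_m (r m - r m0) *: P m).
      apply: eq_bigr => k _; rewrite /Qf; case: eqP => [->|//].
      by rewrite subrr !scale0r.
    under eq_bigr do rewrite scalerBl.
    by rewrite sumrB sr -scaler_sumr sumP c10 scale0r scaler0 subrr.
  have rr k : r k = r m0 by apply/eqP; rewrite -subr_eq0; apply/eqP; exact: (indep _ sr' k).
  have rl : r l = - h.
    by rewrite /r trPP0 norm a0 mulr0 eqxx mulr1 sub0r.
  have := rr m; rewrite -(rr l) rl /r => /eqP; rewrite subr_eq => /eqP ->.
  by rewrite addrC.
exists a, (- h), c1; split.
- by split => //; split => //; exact: inFqN.
- by rewrite a0 expr0n /= eq_sym oppr_eq0.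
- by move=> /negP; rewrite a0 eqxx.
- by [].
split => //.
- exact: inFqN.
- move=> k l kl; rewrite -trPP0 Gram.
  by rewrite (negbTE kl) mulr0 add0r.
Qed.


End Main.

Theorem mainTheorem10 (q : nat) (L : finFieldType) (d n : nat)
    (x : 'I_n -> 'cV[L]_d) :
  #|L| = (q ^ 2)%N -> odd q ->
  let A := exists a c1 c2 : L, proj2design q a c1 c2 x in
  let B := n = (d ^ 2)%N in
  let C := exists a b c1 : L, condC q a b c1 x in
  [/\ (A -> B -> C), (A -> C -> B), (B -> C -> A)
    & (forall a b c1 : L, A -> B -> condC q a b c1 x ->
         proj2design q a c1 (2 * (a ^+ 2 - b)) x)].
Proof.
move=> hcard hodd A B C.
have en : B -> n = (d * d)%N by rewrite /B mulnn.
split.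
- move=> [a [c1 [c2 hA]]] hB.
  exact: (ABC_main hcard hodd (en hB) hA).
- move=> [a' [c1' [c2' hA]]] [a [b [c1 hC]]].
  rewrite /B -mulnn.
  exact: (ACB_main hcard hodd hA hC).
- move=> hB [a [b [c1 hC]]]; exists a, c1, (2 * (a ^+ 2 - b)).
  exact: (BC_main hcard hodd (en hB) hC).
- move=> a b c1 _ hB hC.
  exact: (BC_main hcard hodd (en hB) hC).
Qed.
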